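(* Let $A=(a_{ij})$, $B=(b_{ij})$ be real $2\times2$ payoff tables and let $\mathcal C=\mathbb V(f)\subset\mathbb P^2_{\mathbb C}$ be the Spohn cubic. Then $\mathcal C$ is reducible (equivalently, $f$ is a nonzero polynomial that factors nontrivially over $\mathbb C$) if and only if $f\neq0$ and at least one of the following holds: (1) $a_{11}=a_{12}$; (2) $a_{11}=a_{21}$; (3) $a_{21}=a_{22}$; (4) $b_{11}=b_{12}$; (5) $b_{11}=b_{21}$; (6) $b_{12}=b_{22}$; (7) $a_{12}=a_{22}$ and $b_{21}=b_{22}$; (8) $a_{12}=a_{21}$ and $b_{12}=b_{21}$; (9) $0=a_{12}(b_{12}-b_{22})+a_{21}(b_{22}-b_{21})+a_{22}(b_{21}-b_{12})=a_{11}(b_{22}-b_{12})+a_{21}(b_{11}-b_{22})+a_{22}(b_{12}-b_{11})=a_{11}(b_{22}-b_{21})+a_{12}(b_{11}-b_{22})+a_{22}(b_{21}-b_{11})$; (10) $0=a_{11}(b_{12}-b_{21})+a_{12}(b_{21}-b_{22})+a_{21}(b_{22}-b_{12})=a_{12}(b_{11}-b_{21})+a_{21}(b_{12}-b_{11})+a_{22}(b_{21}-b_{12})=a_{11}(b_{11}-b_{21})+a_{21}(b_{22}-b_{11})+a_{22}(b_{21}-b_{22})$; (11) $0=a_{12}(b_{22}-b_{21})+a_{21}(b_{12}-b_{22})+a_{22}(b_{21}-b_{12})=a_{11}(b_{22}-b_{21})+a_{21}(b_{11}-b_{22})+a_{22}(b_{21}-b_{11})=a_{11}(b_{22}-b_{12})+a_{12}(b_{11}-b_{22})+a_{22}(b_{12}-b_{11})$;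 (12) $0=a_{11}(b_{12}-b_{21})+a_{12}(b_{22}-b_{12})+a_{21}(b_{21}-b_{22})=a_{12}(b_{11}-b_{12})+a_{21}(b_{21}-b_{11})+a_{22}(b_{12}-b_{21})=a_{11}(b_{11}-b_{21})+a_{12}(b_{22}-b_{12})+a_{21}(b_{21}-b_{11})+a_{22}(b_{12}-b_{22})$.
   Context: The Spohn cubic of the game is the plane curve $\mathcal C=\mathbb V(f)\subset\mathbb P^2_{\mathbb C}$ with coordinates $[x:y:z]$ (obtained from the Spohn variety by eliminating $p_{22}$ and renaming $x=p_{11},y=p_{12},z=p_{21}$), where $f=c_1x^2y+c_2x^2z+c_3xy^2+c_4xz^2+c_5y^2z+c_6yz^2+c_7xyz$ with $c_1=(a_{11}-a_{22})(b_{11}-b_{12})$, $c_2=(a_{11}-a_{21})(b_{22}-b_{11})$, $c_3=(a_{12}-a_{22})(b_{11}-b_{12})$, $c_4=(a_{11}-a_{21})(b_{22}-b_{21})$, $c_5=(a_{12}-a_{22})(b_{21}-b_{12})$, $c_6=(a_{12}-a_{21})(b_{22}-b_{21})$, $c_7=(a_{12}-a_{21})(b_{22}-b_{11})+(a_{11}-a_{22})(b_{21}-b_{12})$. *)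

(* Defs.v *)
From HB Require Import structures.
From mathcomp Require Import all_boot all_order all_algebra.
From mathcomp Require Import reals.
From mathcomp Require Import complex.
From mathcomp Require Import mpoly.

Set Implicit Arguments.
Unset Strict Implicit.
Unset Printing Implicit Defensive.

Import Order.TTheory GRing.Theory Num.Theory.
Local Open Scope ring_scope.

Definition spohn_c1 (R : realType) (a11 a12 a21 a22 b11 b12 b21 b22 : R) : R :=
  (a11 - a22) * (b11 - b12).
Definition spohn_c2 (R : realType) (a11 a12 a21 a22 b11 b12 b21 b22 : R) : R :=
  (a11 - a21) * (b22 - b11).
Definition spohn_c3 (R : realType) (a11 a12 a21 a22 b11 b12 b21 b22 : R) : R :=
  (a12 - a22) * (b11 - b12).
Definition spohn_c4 (R : realType) (a11 a12 a21 a22 b11 b12 b21 b22 : R) : R :=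
  (a11 - a21) * (b22 - b21).
Definition spohn_c5 (R : realType) (a11 a12 a21 a22 b11 b12 b21 b22 : R) : R :=
  (a12 - a22) * (b21 - b12).
Definition spohn_c6 (R : realType) (a11 a12 a21 a22 b11 b12 b21 b22 : R) : R :=
  (a12 - a21) * (b22 - b21).
Definition spohn_c7 (R : realType) (a11 a12 a21 a22 b11 b12 b21 b22 : R) : R :=
  (a12 - a21) * (b22 - b11) + (a11 - a22) * (b21 - b12).

Definition spohn_cubic (R : realType) (a11 a12 a21 a22 b11 b12 b21 b22 : R)
    : {mpoly R[i][3]} :=
  let x : {mpoly R[i][3]} := 'X_(inord 0) in
  let y : {mpoly R[i][3]} := 'X_(inord 1) in
  let z : {mpoly R[i][3]} := 'X_(inord 2) in
  let C (c : R) : {mpoly R[i][3]} := ((c%:C)%C)%:MP in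
  C (spohn_c1 a11 a12 a21 a22 b11 b12 b21 b22) * x ^+ 2 * y
  + C (spohn_c2 a11 a12 a21 a22 b11 b12 b21 b22) * x ^+ 2 * z
  + C (spohn_c3 a11 a12 a21 a22 b11 b12 b21 b22) * x * y ^+ 2
  + C (spohn_c4 a11 a12 a21 a22 b11 b12 b21 b22) * x * z ^+ 2
  + C (spohn_c5 a11 a12 a21 a22 b11 b12 b21 b22) * y ^+ 2 * z
  + C (spohn_c6 a11 a12 a21 a22 b11 b12 b21 b22) * y * z ^+ 2
  + C (spohn_c7 a11 a12 a21 a22 b11 b12 b21 b22) * x * y * z.

(* A multivariate polynomial is reducible when it is nonzero and is a product
   of two non-constant polynomials (msize p = 1 + total degree, so
   msize p > 1 means p is non-constant). *)
Definition mpoly_reducible (F : fieldType) (n : nat) (p : {mpoly F[n]}) : Prop :=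
  p != 0 /\ exists g h : {mpoly F[n]}, [/\ (1 < msize g)%N, (1 < msize h)%N & p = g * h].

(* Main.v *)
Require Import Defs.
From HB Require Import structures.
From mathcomp Require Import all_boot all_order all_algebra.
From mathcomp Require Import reals.
From mathcomp Require Import complex.
From mathcomp Require Import mpoly.
From mathcomp Require Import ring zify.
Import Order.TTheory GRing.Theory Num.Theory.
Local Open Scope ring_scope.
Set Implicit Arguments.
Unset Strict Implicit.
Unset Printing Implicit Defensive.

Lemma lc1 (K : comNzRingType) (T a A : K) : A = 0 -> T = a * A -> T = 0.
Proof. by move=> -> ->; rewrite mulr0. Qed.
Lemma lc2 (K : comNzRingType) (T a b A B : K) :
  A = 0 -> B = 0 -> T = a * A + b * B -> T = 0.
Proof. by move=> -> -> ->; rewrite !mulr0 addr0. Qed.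
Lemma lc3 (K : comNzRingType) (T a b c A B C : K) :
  A = 0 -> B = 0 -> C = 0 -> T = a * A + b * B + c * C -> T = 0.
Proof. by move=> -> -> -> ->; rewrite !mulr0 !addr0. Qed.
Lemma mul0 (K : idomainType) (a b : K) : a * b = 0 -> a = 0 \/ b = 0.
Proof. by move/eqP; rewrite mulf_eq0 => /orP [/eqP|/eqP]; [left|right]. Qed.
Lemma two0 (K : idomainType) (x : K) : (2:K) != 0 -> 2 * x = 0 -> x = 0.
Proof. by move=> h /mul0 [/eqP|//]; rewrite (negbTE h). Qed.
Lemma nz_mul (K : idomainType) (a b : K) : a != 0 -> a * b = 0 -> b = 0.
Proof. by move=> h /mul0 [/eqP|//]; rewrite (negbTE h). Qed.
Lemma nz_mulr (K : idomainType) (a b : K) : b != 0 -> a * b = 0 -> a = 0.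
Proof. by move=> h /mul0 [//|/eqP]; rewrite (negbTE h). Qed.

Definition FF (K : comNzRingType) (p q r u w s x y z : K) : K :=
  (p+r)*u * x^+2 * y + p*(w+s-u) * x^+2 * z + q*u * x * y^+2 + p*w * x * z^+2
  + q*s * y^+2 * z + (q-r)*w * y * z^+2
  + ((q-r)*(w+s-u) + (p+r)*s) * x * y * z.

Definition condsP (K : comNzRingType) (p q r u w s : K) : Prop :=
  p + r - q = 0 \/ p = 0 \/ r = 0 \/ u = 0 \/ s - u = 0 \/ w + s = 0 \/
  (q = 0 /\ w = 0) \/ (q - r = 0 /\ s = 0) \/
  (- (q*w) - q*s + r*w = 0 /\ p*w + p*s + r*u = 0 /\ p*w + q*u - q*w - q*s + r*w = 0) \/
  (- (p*s) - q*w + r*w = 0 /\ q*u - q*s - r*u = 0 /\ p*u - p*s + r*w = 0) \/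
  (q*w - r*w - r*s = 0 /\ p*w + r*u - r*s = 0 /\ p*w + p*s + q*u - q*w - q*s + r*w + r*s = 0) \/
  (- (p*s) + q*w + q*s - r*w - r*s = 0 /\ q*u - r*u + r*s = 0 /\ p*u - p*s + q*w + q*s = 0).

Lemma caseI (K : idomainType) (p q r u w s : K) : (2:K) != 0 ->
  (forall x y, FF p q r u w s x y 0 = 0) -> condsP p q r u w s.
Proof.
move=> h2 H.
have k1 := H 1 1; have k2 := H 1 (-1); rewrite /FF in k1 k2.
have e1 : (p+r)*u = 0.
  by apply: two0 h2 _; apply: (lc2 (a:=1) (b:=-1) k1 k2); ring.
have e3 : q*u = 0 by apply: two0 h2 _; apply: (lc2 (a:=1) (b:=1) k1 k2); ring.
case: (mul0 e3) => [hq|hu]; last by do 3 right; left.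
case: (mul0 e1) => [hpr|hu]; last by do 3 right; left.
by left; apply: (lc2 (a:=1) (b:=-1) hpr hq); ring.
Qed.

Lemma caseII (K : idomainType) (p q r u w s t : K) : (2:K) != 0 ->
  (forall x z, FF p q r u w s x (t*z) z = 0) -> condsP p q r u w s.
Proof.
move=> h2 H.
have k0 := H 0 1; have k1 := H 1 1; have k2 := H (-1) 1; rewrite /FF in k0 k1 k2.
have a2 : q*s*t^+2 + (q-r)*w*t = 0 by apply: (lc1 (a:=1) k0); ring.
have a1 : (p+r)*u*t + p*(w+s-u) = 0.
  by apply: two0 h2 _; apply: (lc3 (a:=1) (b:=1) (c:=-2) k1 k2 a2); ring.
have a3 : q*u*t^+2 + ((q-r)*(w+s-u) + (p+r)*s)*t + p*w = 0.
  by apply: two0 h2 _; apply: (lc2 (a:=1) (b:=-1) k1 k2); ring.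
case: (eqVneq t 0) => [ht|ht].
  rewrite ht in a1 a3.
  have e2 : p*(w+s-u) = 0 by apply: (lc1 (a:=1) a1); ring.
  have e4 : p*w = 0 by apply: (lc1 (a:=1) a3); ring.
  case: (mul0 e4) => [hp|hw]; first by right; left.
  case: (mul0 e2) => [hp|hW]; first by right; left.
  by do 4 right; left; apply: (lc2 (a:=1) (b:=-1) hW hw); ring.
have b2 : q*s*t + (q-r)*w = 0.
  by apply: (nz_mul ht); apply: (lc1 (a:=1) a2); ring.
case: (eqVneq (s-u) 0) => [h5|h5]; first by do 4 right; left.
case: (eqVneq (w+s) 0) => [h6|h6]; first by do 5 right; left.
have hD : ((s-u)*(w+s)*t*(t-1)*(u*t+w)) * p = 0.
  apply: (lc3 (a:=(- u*w*t^+2 - u*s*t^+2 + w*s*t^+2 - w*s*t))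
              (b:=(- u^+2*t^+3 + u^+2*t^+2 - u*w*t^+2 - u*s*t^+2))
              (c:=(u*w*t + u*s*t^+2)) a1 b2 a3); ring.
case: (mul0 hD) => [hD'|hp]; last by right; left.
case: (mul0 hD') => [hD2|hut].
  case: (mul0 hD2) => [hD3|ht1].
    case: (mul0 hD3) => [hD4|ht0]; last by move/eqP: ht; rewrite ht0.
    case: (mul0 hD4) => [h|h]; [by move/eqP: h5 | by move/eqP: h6].
  have ht1' : t = 1 by apply/eqP; rewrite -subr_eq0; apply/eqP.
  rewrite ht1' in a1 b2 a3.
  do 8 right; left; split; last split.
  - by apply: (lc1 (a:=-1) b2); ring.
  - by apply: (lc1 (a:=1) a1); ring.
  - apply: (nz_mul h6); apply: (lc2 (a:=w) (b:=u-w-s) a1 b2); ring.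
case: (eqVneq u 0) => [hu|hu]; first by do 3 right; left.
have hw : w = - (u*t).
  by apply/eqP; rewrite -subr_eq0 opprK addrC; apply/eqP.
subst w.
do 9 right; left; split; last split.
- apply: (nz_mul h5); apply: (lc2 (a:=-s) (b:=u) a1 b2); ring.
- apply: (nz_mul ht); apply: (lc1 (a:=-1) b2); ring.
- by apply: (lc1 (a:=-1) a1); ring.
Qed.

Lemma caseIII (K : idomainType) (p q r u w s b g : K) : (2:K) != 0 ->
  (forall y z, FF p q r u w s (-(b*y+g*z)) y z = 0) -> condsP p q r u w s.
Proof.
move=> h2 H.
have k10 := H 1 0; have k01 := H 0 1; have k11 := H 1 1; have k1m := H 1 (-1).
rewrite /FF in k10 k01 k11 k1m.
have e1 : b*((p+r)*u*b - q*u) = 0 by apply: (lc1 (a:=1) k10); ring.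
have e2 : g*(p*(w+s-u)*g - p*w) = 0 by apply: (lc1 (a:=1) k01); ring.
have e4 : (p+r)*u*g^+2 + 2 * p*(w+s-u)*b*g - p*w*b
          - ((q-r)*(w+s-u)+(p+r)*s)*g + (q-r)*w = 0.
  by apply: two0 h2 _; apply: (lc3 (a:=1) (b:=1) (c:=-2) k11 k1m e1); ring.
have e3 : 2 * (p+r)*u*b*g + p*(w+s-u)*b^+2 - q*u*g
          - ((q-r)*(w+s-u)+(p+r)*s)*b + q*s = 0.
  by apply: two0 h2 _; apply: (lc3 (a:=1) (b:=-1) (c:=-2) k11 k1m e2); ring.
case: (eqVneq b 0) => [hb|hb]; case: (eqVneq g 0) => [hg|hg].
- rewrite hb hg in e3 e4.
  have h5 : q*s = 0 by apply: (lc1 (a:=1) e3); ring.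
  have h6 : (q-r)*w = 0 by apply: (lc1 (a:=1) e4); ring.
  case: (mul0 h5) => [hq|hs]; case: (mul0 h6) => [hqr|hw].
  + by do 2 right; left; apply: (lc2 (a:=1) (b:=-1) hq hqr); ring.
  + by do 6 right; left.
  + by do 7 right; left.
  + by do 5 right; left; apply: (lc2 (a:=1) (b:=1) hw hs); ring.
- rewrite hb in e3 e4.
  have hpH : p*((w+s-u)*g - w) = 0.
    by apply: (nz_mul hg); apply: (lc1 (a:=1) e2); ring.
  case: (mul0 hpH) => [hp|hH]; first by right; left.
  have e3' : q*(s - u*g) = 0 by apply: (lc1 (a:=1) e3); ring.
  have e4' : (p+r)*g*(u*g - s) = 0.
    by apply: (lc2 (a:=1) (b:=q-r) e4 hH); ring.
  case: (eqVneq (u*g - s) 0) => [hug|hug].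
    have hg1 : (g-1)*(w+s) = 0 by apply: (lc2 (a:=1) (b:=1) hH hug); ring.
    case: (mul0 hg1) => [hg1'|h6]; last by do 5 right; left.
    by do 4 right; left; apply: (lc2 (a:=-1) (b:=u) hug hg1'); ring.
  have hq : q = 0.
    apply: (nz_mulr (b:=s-u*g)) e3'.
    by apply: contra hug => /eqP h; apply/eqP; apply: (lc1 (a:=-1) h); ring.
  have hpr : p + r = 0 by apply: (nz_mulr hg); apply: (nz_mulr hug).
  by left; apply: (lc2 (a:=1) (b:=-1) hpr hq); ring.
- rewrite hg in e3 e4.
  have hu : u*((p+r)*b - q) = 0 by apply: (nz_mul hb); apply: (lc1 (a:=1) e1); ring.
  case: (mul0 hu) => [hu'|hq]; first by do 3 right; left.
  have hw : w*(q - r - p*b) = 0 by apply: (lc1 (a:=1) e4); ring.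
  case: (mul0 hw) => [hw'|hqr].
    have : r*(s-u)*b*(1-b) = 0.
      by apply: (lc3 (a:=1) (b:=u*b - w*b - w - s*b + s) (c:=p*b - q + r*b^+2) e3 hq hw'); ring.
    case/mul0 => [/mul0 [/mul0 [hr|h5]|hb0]|hb1].
    + by do 2 right; left.
    + by do 4 right; left.
    + by move/eqP: hb; rewrite hb0.
    + by left; apply: (lc2 (a:=1) (b:=p+r) hq hb1); ring.
  have : r*(b-1) = 0 by apply: (lc2 (a:=1) (b:=1) hq hqr); ring.
  case/mul0 => [hr|hb1]; first by do 2 right; left.
  by left; apply: (lc2 (a:=1) (b:=-(p+r)) hq hb1); ring.
- have hu : u*((p+r)*b - q) = 0 by apply: (nz_mul hb); apply: (lc1 (a:=1) e1); ring.
  case: (mul0 hu) => [hu'|hq]; first by do 3 right; left.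
  have hpH : p*((w+s-u)*g - w) = 0.
    by apply: (nz_mul hg); apply: (lc1 (a:=1) e2); ring.
  case: (mul0 hpH) => [hp|hH]; first by right; left.
  have hq' : q = (p+r)*b by apply/eqP; rewrite eq_sym -subr_eq0; apply/eqP.
  subst q.
  have hX : (p+r)*u*g - r*(w+s-u)*(b-1) = 0.
    by apply: (nz_mul hb); apply: (lc1 (a:=1) e3); ring.
  have hY : (p+r)*u*(g-1) + p*(w+s-u)*(b+g-1) + r*(w+s-u)*(g-1) = 0.
    apply: (nz_mul hg).
    by apply: (lc2 (a:=1) (b:=p*g + r*b + r*g - r) e4 hH); ring.
  have : ((p+r)*g - r)*((p+r)*u + r*(w+s-u)) = 0.
    by apply: (lc2 (a:=r) (b:=p) hY hX); ring.
  case/mul0 => [hP|hQ].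
    have : r*(u - (w+s-u)*(b-1)) = 0 by apply: (lc2 (a:=1) (b:=-u) hX hP); ring.
    case/mul0 => [hr|hR]; first by do 2 right; left.
    do 10 right; left; split; last split.
    + by apply: (lc3 (a:=-p*b - r*b) (b:=- u*b + w*b + s*b) (c:=-r) hH hP hR); ring.
    + by apply: (lc3 (a:=-p - r) (b:=- u + w + s) (c:=0) hH hP hR); ring.
    + by apply: (lc3 (a:=0) (b:=0) (c:=p + r) hH hP hR); ring.
  have : r*(w+s-u)*(b+g-1) = 0 by apply: (lc2 (a:=g) (b:=-1) hQ hX); ring.
  case/mul0 => [/mul0 [hr|hW]|hS]; first by do 2 right; left.
    have hw : w = 0 by apply: (lc2 (a:=g) (b:=-1) hW hH); ring.
    have : (p+r)*u = 0 by apply: (lc2 (a:=1) (b:=-r) hQ hW); ring.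
    case/mul0 => [hpr|hu']; last by do 3 right; left.
    by left; apply: (lc1 (a:=1-b) hpr); ring.
  do 11 right; split; last split.
  + by apply: (lc3 (a:=-p) (b:=b-1) (c:=- p*u + p*w + p*s) hH hQ hS); ring.
  + by apply: (lc3 (a:=r) (b:=- g + 1) (c:=p*u + r*u) hH hQ hS); ring.
  + by apply: (lc3 (a:=-p) (b:=b) (c:=- p*u + p*w + p*s) hH hQ hS); ring.
Qed.

Lemma core (K : fieldType) (p q r u w s al be ga : K) : (2:K) != 0 ->
  [|| al != 0, be != 0 | ga != 0] ->
  (forall x y z, al*x + be*y + ga*z = 0 -> FF p q r u w s x y z = 0) ->
  condsP p q r u w s.
Proof.
move=> h2 hnz H.
case: (eqVneq al 0) => [hal|hal].
  case: (eqVneq be 0) => [hbe|hbe].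
    apply: caseI h2 _ => x y; apply: H; rewrite hal hbe; ring.
  apply: (caseII (t := - ga / be)) h2 _ => x z; apply: H; rewrite hal; field; exact hbe.
apply: (caseIII (b := be / al) (g := ga / al)) h2 _ => y z; apply: H; field; exact hal.
Qed.

Definition MC (R : realType) (c : R) : {mpoly R[i][3]} := ((c%:C)%C)%:MP.
Definition XX (R : realType) (k : nat) : {mpoly R[i][3]} := 'X_(inord k).

Definition cub (R : realType) (d1 d2 d3 d4 d5 d6 d7 : R) : {mpoly R[i][3]} :=
  let x := XX R 0 in let y := XX R 1 in let z := XX R 2 in
  MC d1 * x ^+ 2 * y + MC d2 * x ^+ 2 * z + MC d3 * x * y ^+ 2 + MC d4 * x * z ^+ 2
  + MC d5 * y ^+ 2 * z + MC d6 * y * z ^+ 2 + MC d7 * x * y * z.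

Definition lin (R : realType) (l1 l2 l3 : R) : {mpoly R[i][3]} :=
  MC l1 * XX R 0 + MC l2 * XX R 1 + MC l3 * XX R 2.
Definition quad (R : realType) (q1 q2 q3 q4 q5 q6 : R) : {mpoly R[i][3]} :=
  let x := XX R 0 in let y := XX R 1 in let z := XX R 2 in
  MC q1 * x^+2 + MC q2 * y^+2 + MC q3 * z^+2 + MC q4 * x * y + MC q5 * x * z + MC q6 * y * z.

Lemma MCD (R : realType) (a b : R) : MC (a + b) = MC a + MC b.
Proof. by rewrite /MC !rmorphD. Qed.
Lemma MCM (R : realType) (a b : R) : MC (a * b) = MC a * MC b.
Proof. by rewrite /MC !rmorphM. Qed.
Lemma MC0 (R : realType) : MC (0 : R) = 0.
Proof. by rewrite /MC !rmorph0. Qed.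

Lemma factorize (R : realType) (l1 l2 l3 q1 q2 q3 q4 q5 q6 d1 d2 d3 d4 d5 d6 d7 : R) :
  l1*q1 = 0 -> l2*q2 = 0 -> l3*q3 = 0 ->
  l1*q4 + l2*q1 = d1 -> l1*q5 + l3*q1 = d2 -> l1*q2 + l2*q4 = d3 ->
  l1*q3 + l3*q5 = d4 -> l2*q6 + l3*q2 = d5 -> l2*q3 + l3*q6 = d6 ->
  l1*q6 + l2*q5 + l3*q4 = d7 ->
  cub d1 d2 d3 d4 d5 d6 d7 = lin l1 l2 l3 * quad q1 q2 q3 q4 q5 q6.
Proof.
move=> h1 h2 h3 <- <- <- <- <- <- <-.
transitivity (cub (l1*q4 + l2*q1) (l1*q5 + l3*q1) (l1*q2 + l2*q4) (l1*q3 + l3*q5)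
   (l2*q6 + l3*q2) (l2*q3 + l3*q6) (l1*q6 + l2*q5 + l3*q4)
   + MC (l1*q1) * XX R 0 ^+ 3 + MC (l2*q2) * XX R 1 ^+ 3 + MC (l3*q3) * XX R 2 ^+ 3).
  by rewrite h1 h2 h3 MC0 !mul0r !addr0.
rewrite /cub /lin /quad !(MCD, MCM); ring.
Qed.

Lemma MC_homog (R : realType) (c : R) : MC c \is 0.-homog.
Proof. by rewrite /MC -[_%:MP]mulr1 mul_mpolyC; apply/dhomogZ/dhomog1. Qed.
Lemma XX_homog (R : realType) k : XX R k \is 1.-homog.
Proof. by rewrite /XX dhomogX; apply/eqP; exact: mdeg1. Qed.

Lemma cub_homog (R : realType) (d1 d2 d3 d4 d5 d6 d7 : R) :
  cub d1 d2 d3 d4 d5 d6 d7 \is 3.-homog.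
Proof.
have H0 := @MC_homog R; have H1 := XX_homog R.
have T1 : forall c a b e, MC c * XX R a * XX R b * XX R e \is 3.-homog.
  by move=> c a b e; exact: (dhomogM (dhomogM (dhomogM (H0 _) (H1 _)) (H1 _)) (H1 _)).
have T2 : forall c a b, MC c * XX R a ^+ 2 * XX R b \is 3.-homog.
  by move=> c a b; exact: (dhomogM (dhomogM (H0 _) (dhomogMn 2 (H1 _))) (H1 _)).
have T3 : forall c a b, MC c * XX R a * XX R b ^+ 2 \is 3.-homog.
  by move=> c a b; exact: (dhomogM (dhomogM (H0 _) (H1 _)) (dhomogMn 2 (H1 _))).
by rewrite /cub !rpredD ?T1 ?T2 ?T3.
Qed.

Lemma lin_homog (R : realType) (l1 l2 l3 : R) : lin l1 l2 l3 \is 1.-homog.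
Proof.
have H0 := @MC_homog R; have H1 := XX_homog R.
have T : forall c a, MC c * XX R a \is 1.-homog.
  by move=> c a; exact: (dhomogM (H0 _) (H1 _)).
by rewrite /lin !rpredD ?T.
Qed.

Lemma msize_homog (K : fieldType) n (p : {mpoly K[n]}) d :
  p != 0 -> p \is d.-homog -> msize p = d.+1.
Proof.
move=> nz h; have h' := dhomog_msize h.
have -> := dhomog_uniq nz h h'.
rewrite prednK // lt0n; by rewrite msize_poly_eq0.
Qed.

Lemma red_of_fact (R : realType) (d1 d2 d3 d4 d5 d6 d7 l1 l2 l3 q1 q2 q3 q4 q5 q6 : R) :
  cub d1 d2 d3 d4 d5 d6 d7 != 0 ->
  cub d1 d2 d3 d4 d5 d6 d7 = lin l1 l2 l3 * quad q1 q2 q3 q4 q5 q6 ->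
  mpoly_reducible (cub d1 d2 d3 d4 d5 d6 d7).
Proof.
move=> nz E; split => //; exists (lin l1 l2 l3), (quad q1 q2 q3 q4 q5 q6).
have nzl : lin l1 l2 l3 != 0 by apply: contra nz; rewrite E => /eqP ->; rewrite mul0r.
have nzq : quad q1 q2 q3 q4 q5 q6 != 0 by apply: contra nz; rewrite E => /eqP ->; rewrite mulr0.
have ml := msize_homog nzl (lin_homog _ _ _).
have mc := msize_homog nz (cub_homog _ _ _ _ _ _ _).
have := msizeM nzl nzq; rewrite -E mc ml => h.
split; [done | | done].
by move: h; case: (msize (quad _ _ _ _ _ _)) => [|[|[|k]]].
Qed.

Lemma lin_struct (K : fieldType) (g : {mpoly K[3]}) : (msize g <= 2)%N ->
  g = (g@_0)%:MP + \sum_(i < 3) g@_U_(i) *: 'X_i.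
Proof.
move=> hs; apply/mpolyP => m.
rewrite mcoeffD mcoeffC raddf_sum /=.
under eq_bigr => i _ do rewrite mcoeffZ mcoeffX.
case: (eqVneq m 0%MM) => [->|m0].
  rewrite mulr1 big1 ?addr0 // => i _.
  by rewrite mnm1_eq0 mulr0.
rewrite mulr0 add0r.
case: (boolP (mdeg m == 1%N)) => [/mdeg1P [j /eqP ->]| h1].
  rewrite (bigD1 j) //= eqxx mulr1 big1 ?addr0 // => i ij.
  by rewrite eq_mnm1 (negbTE ij) mulr0.
rewrite big1; last by move=> i _; rewrite (_ : (U_(i) == m)%MM = false) ?mulr0 //;
  apply/negbTE; apply: contra h1 => /eqP <-; rewrite mdeg1.
apply: memN_msupp_eq0; apply: msize_mdeg_ge; apply: (leq_trans hs).
by move: m0 h1; rewrite -mdeg_eq0; case: (mdeg m) => [|[|]].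
Qed.

Lemma vanish (K : numFieldType) (F : K -> K -> K -> K) (a0 al be ga : K) :
  (forall x y z k, F (k*x) (k*y) (k*z) = k^+3 * F x y z) ->
  (forall x y z ux uy uz, F x y z = 4 * F (x+1*ux) (y+1*uy) (z+1*uz)
      - 6 * F (x+2*ux) (y+2*uy) (z+2*uz) + 4 * F (x+3*ux) (y+3*uy) (z+3*uz)
      - F (x+4*ux) (y+4*uy) (z+4*uz)) ->
  (forall x y z, a0 + al*x + be*y + ga*z = 0 -> F x y z = 0) ->
  a0 != 0 -> [|| al != 0, be != 0 | ga != 0] ->
  forall x y z, al*x + be*y + ga*z = 0 -> F x y z = 0.
Proof.
move=> Hh Hd H a0nz hnz x y z hL.
have [ux [uy [uz hu]]] : exists ux uy uz, al*ux + be*uy + ga*uz = 1.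
  case/or3P: hnz => h; [exists al^-1, 0, 0 | exists 0, be^-1, 0 | exists 0, 0, ga^-1];
    field; exact: h.
have Hk : forall k : K, k != 0 -> F (x + k*ux) (y + k*uy) (z + k*uz) = 0.
  move=> k knz.
  have cnz : (- a0 / k) ^+ 3 != 0.
    by rewrite expf_neq0 // mulf_neq0 ?oppr_eq0 ?invr_eq0.
  apply: (nz_mul cnz); rewrite -Hh; apply: H.
  rewrite (_ : a0 + _ + _ + _ = a0 + (- a0 / k) * (al*x+be*y+ga*z)
              + (- a0 / k) * k * (al*ux+be*uy+ga*uz)); last by ring.
  by rewrite hL hu; field.
rewrite (Hd x y z ux uy uz) !Hk ?oner_neq0 ?pnatr_eq0 //; ring.
Qed.

Definition Fc (R : realType) (d1 d2 d3 d4 d5 d6 d7 : R) (x y z : R[i]) : R[i] :=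
  (d1%:C)%C * x^+2 * y + (d2%:C)%C * x^+2 * z + (d3%:C)%C * x * y^+2
  + (d4%:C)%C * x * z^+2 + (d5%:C)%C * y^+2 * z + (d6%:C)%C * y * z^+2
  + (d7%:C)%C * x * y * z.

Definition vv (K : ringType) (x y z : K) : 'I_3 -> K := fun i => nth 0 [:: x; y; z] i.

Lemma cub_eval (R : realType) (d1 d2 d3 d4 d5 d6 d7 : R) x y z :
  (cub d1 d2 d3 d4 d5 d6 d7).@[vv x y z] = Fc d1 d2 d3 d4 d5 d6 d7 x y z.
Proof.
rewrite /cub /MC /XX !(mevalD, mevalM, mevalC, mevalXU, rmorphXn) /vv /=.
by rewrite !inordK.
Qed.


Lemma rev_main (R : realType) (d1 d2 d3 d4 d5 d6 d7 : R) :
  mpoly_reducible (cub d1 d2 d3 d4 d5 d6 d7) ->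
  exists al be ga : R[i], [|| al != 0, be != 0 | ga != 0] /\
    forall x y z, al*x + be*y + ga*z = 0 -> Fc d1 d2 d3 d4 d5 d6 d7 x y z = 0.
Proof.
case=> nz [g [h [hg hh E]]].
have gnz : g != 0 by apply: contra nz; rewrite E => /eqP ->; rewrite mul0r.
have hnz : h != 0 by apply: contra nz; rewrite E => /eqP ->; rewrite mulr0.
have msz := msize_homog nz (cub_homog _ _ _ _ _ _ _).
have := msizeM gnz hnz; rewrite -E msz => hs.
suff key : forall g h : {mpoly R[i][3]}, cub d1 d2 d3 d4 d5 d6 d7 = g * h ->
    msize g = 2 -> exists al be ga : R[i], [|| al != 0, be != 0 | ga != 0] /\
    forall x y z, al*x + be*y + ga*z = 0 -> Fc d1 d2 d3 d4 d5 d6 d7 x y z = 0.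
  case: (eqVneq (msize g) 2) => [e|e]; first exact: key E e.
  apply: (key h g); first by rewrite E mulrC.
  move/eqP: e => e; move: hs hg hh e; move: (msize g) (msize h) => a b.
  by rewrite -subn1; lia.
move=> {g h hg hh E gnz hnz hs} g h E hg2.
have hle : (msize g <= 2)%N by rewrite hg2.
have gv : forall x y z, g.@[vv x y z] = g@_0 + g@_U_(ord0) * x
    + g@_U_(lift ord0 ord0) * y + g@_U_(lift ord0 (lift ord0 ord0)) * z.
  move=> x y z; rewrite {1}(lin_struct hle) mevalD mevalC raddf_sum /=.
  rewrite !big_ord_recl big_ord0 !mevalZ !mevalXU /vv /=.
  by rewrite !addrA addr0.
have Fv : forall x y z, Fc d1 d2 d3 d4 d5 d6 d7 x y z =
    (g@_0 + g@_U_(ord0) * x + g@_U_(lift ord0 ord0) * y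
     + g@_U_(lift ord0 (lift ord0 ord0)) * z) * h.@[vv x y z].
  by move=> x y z; rewrite -gv -mevalM -E cub_eval.
have hnz3 : [|| g@_U_(ord0) != 0, g@_U_(lift ord0 ord0) != 0
             | g@_U_(lift ord0 (lift ord0 ord0)) != 0].
  apply: contraT => /norP [/negbNE/eqP h0 /norP [/negbNE/eqP h1 /negbNE/eqP h2]].
  move: hg2; rewrite (lin_struct hle) !big_ord_recl big_ord0 h0 h1 h2 !scale0r !addr0.
  by rewrite msizeC; case: (_ != 0).
exists (g@_U_(ord0)), (g@_U_(lift ord0 ord0)), (g@_U_(lift ord0 (lift ord0 ord0))).
split => //.
case: (eqVneq (g@_0) 0) => [a00|a0nz].
  by move=> x y z hL; rewrite Fv a00 add0r hL mul0r.
apply: (vanish _ _ _ a0nz hnz3).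
- by move=> x y z k; rewrite /Fc; ring.
- by move=> x y z ux uy uz; rewrite /Fc; ring.
- by move=> x y z h0; rewrite Fv h0 mul0r.
Qed.

Definition cubP (R : realType) (p q r u w s : R) : {mpoly R[i][3]} :=
  cub ((p+r)*u) (p*(w+s-u)) (q*u) (p*w) (q*s) ((q-r)*w) ((q-r)*(w+s-u) + (p+r)*s).

Lemma eqsub (K : zmodType) (a b : K) : a - b = 0 -> a = b.
Proof. by move/eqP; rewrite subr_eq0 => /eqP. Qed.

Lemma solveD (K : fieldType) (x D N M : K) : D != 0 -> x * D = N -> N / D = M -> x = M.
Proof. by move=> hD <- <-; rewrite mulfK. Qed.

Lemma fwd1 (R : realType) (p q r u w s : R) : cubP p q r u w s != 0 ->
  p + r - q = 0 -> mpoly_reducible (cubP p q r u w s).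
Proof.
move=> nz H; have hq : q = p + r by symmetry; apply: eqsub.
subst q; rewrite /cubP in nz *.
apply: (red_of_fact (l1:=1) (l2:=1) (l3:=0) (q1:=0) (q2:=0) (q3:=(p*w)) (q4:=(p*u + r*u)) (q5:=(- p*u + p*w + p*s)) (q6:=(p*s + r*s)) nz).
  by apply: factorize; ring.
Qed.

Lemma fwd2 (R : realType) (p q r u w s : R) : cubP p q r u w s != 0 ->
  p = 0 -> mpoly_reducible (cubP p q r u w s).
Proof.
move=> nz H; subst p; rewrite /cubP in nz *.
apply: (red_of_fact (l1:=0) (l2:=1) (l3:=0) (q1:=(r*u)) (q2:=0) (q3:=(q*w - r*w)) (q4:=(q*u)) (q5:=(- q*u + q*w + q*s + r*u - r*w)) (q6:=(q*s)) nz).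
  by apply: factorize; ring.
Qed.

Lemma fwd3 (R : realType) (p q r u w s : R) : cubP p q r u w s != 0 ->
  r = 0 -> mpoly_reducible (cubP p q r u w s).
Proof.
move=> nz H; subst r; rewrite /cubP in nz *.
apply: (red_of_fact (l1:=p) (l2:=q) (l3:=0) (q1:=0) (q2:=0) (q3:=(w)) (q4:=(u)) (q5:=(- u + w + s)) (q6:=(s)) nz).
  by apply: factorize; ring.
Qed.

Lemma fwd4 (R : realType) (p q r u w s : R) : cubP p q r u w s != 0 ->
  u = 0 -> mpoly_reducible (cubP p q r u w s).
Proof.
move=> nz H; subst u; rewrite /cubP in nz *.
apply: (red_of_fact (l1:=0) (l2:=0) (l3:=1) (q1:=(p*w + p*s)) (q2:=(q*s)) (q3:=0) (q4:=(p*s + q*w + q*s - r*w)) (q5:=(p*w)) (q6:=(q*w - r*w)) nz).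
  by apply: factorize; ring.
Qed.

Lemma fwd5 (R : realType) (p q r u w s : R) : cubP p q r u w s != 0 ->
  s - u = 0 -> mpoly_reducible (cubP p q r u w s).
Proof.
move=> nz H; have hs : s = u by apply: eqsub.
subst s; rewrite /cubP in nz *.
apply: (red_of_fact (l1:=1) (l2:=0) (l3:=1) (q1:=0) (q2:=(q*u)) (q3:=0) (q4:=(p*u + r*u)) (q5:=(p*w)) (q6:=(q*w - r*w)) nz).
  by apply: factorize; ring.
Qed.

Lemma fwd6 (R : realType) (p q r u w s : R) : cubP p q r u w s != 0 ->
  w + s = 0 -> mpoly_reducible (cubP p q r u w s).
Proof.
move=> nz H; have hw : w = - s by apply: eqsub; rewrite opprK.
subst w; rewrite /cubP in nz *.
apply: (red_of_fact (l1:=u) (l2:=0) (l3:=s) (q1:=0) (q2:=(q)) (q3:=0) (q4:=(p + r)) (q5:=(- p)) (q6:=(- q + r)) nz).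
  by apply: factorize; ring.
Qed.

Lemma fwd7 (R : realType) (p q r u w s : R) : cubP p q r u w s != 0 ->
  q = 0 /\ w = 0 -> mpoly_reducible (cubP p q r u w s).
Proof.
move=> nz [H1 H2]; subst q w; rewrite /cubP in nz *.
apply: (red_of_fact (l1:=1) (l2:=0) (l3:=0) (q1:=0) (q2:=0) (q3:=0) (q4:=((p+r)*u)) (q5:=(p*(s-u))) (q6:=((-r)*(s-u) + (p+r)*s)) nz).
  by apply: factorize; ring.
Qed.

Lemma fwd8 (R : realType) (p q r u w s : R) : cubP p q r u w s != 0 ->
  q - r = 0 /\ s = 0 -> mpoly_reducible (cubP p q r u w s).
Proof.
move=> nz [H1 H2]; have hq : q = r by apply: eqsub.
subst q s; rewrite /cubP in nz *.
apply: (red_of_fact (l1:=1) (l2:=0) (l3:=0) (q1:=0) (q2:=(r*u)) (q3:=(p*w)) (q4:=((p+r)*u)) (q5:=(p*(w-u))) (q6:=0) nz).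
  by apply: factorize; ring.
Qed.

Lemma fwd9 (R : realType) (p q r u w s : R) : cubP p q r u w s != 0 ->
  (- (q*w) - q*s + r*w = 0 /\ p*w + p*s + r*u = 0 /\ p*w + q*u - q*w - q*s + r*w = 0) ->
  mpoly_reducible (cubP p q r u w s).
Proof.
move=> nz [ha [hb hc]].
case: (eqVneq (w+s) 0) => [hD|hD]; first exact: fwd6.
pose h := r/(w+s).
have hp : p = -u*h.
  apply: (solveD hD (N := -(r*u))); first by apply: eqsub; apply: (lc1 (a:=1) hb); ring.
  by rewrite /h; field; exact hD.
have hq : q = w*h.
  apply: (solveD hD (N := r*w)); first by apply: eqsub; apply: (lc1 (a:=-1) ha); ring.
  by rewrite /h; field; exact hD.
have hr : r = (w+s)*h by rewrite /h; field; exact hD.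
clearbody h; subst p q r; rewrite /cubP in nz *.
apply: (red_of_fact (l1:=0) (l2:=1) (l3:=(-1)) (q1:=(- u^+2*h + u*w*h + u*s*h)) (q2:=0) (q3:=0) (q4:=(u*w*h)) (q5:=(u*w*h)) (q6:=(w*s*h)) nz).
  by apply: factorize; ring.
Qed.

Lemma fwd10 (R : realType) (p q r u w s : R) : cubP p q r u w s != 0 ->
  (- (p*s) - q*w + r*w = 0 /\ q*u - q*s - r*u = 0 /\ p*u - p*s + r*w = 0) ->
  mpoly_reducible (cubP p q r u w s).
Proof.
move=> nz [ha [hb hc]].
case: (eqVneq (u-s) 0) => [hD|hD].
  by apply: fwd5 => //; apply: (lc1 (a:=-1) hD); ring.
pose h := r/(u-s).
have hp : p = -w*h.
  apply: (solveD hD (N := -(r*w))); first by apply: eqsub; apply: (lc1 (a:=1) hc); ring.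
  by rewrite /h; field; exact hD.
have hq : q = u*h.
  apply: (solveD hD (N := r*u)); first by apply: eqsub; apply: (lc1 (a:=1) hb); ring.
  by rewrite /h; field; exact hD.
have hr : r = (u-s)*h by rewrite /h; field; exact hD.
clearbody h; subst p q r; rewrite /cubP in nz *.
apply: (red_of_fact (l1:=0) (l2:=u) (l3:=w) (q1:=(u*h - w*h - s*h)) (q2:=0) (q3:=0) (q4:=(u*h)) (q5:=(- w*h)) (q6:=(s*h)) nz).
  by apply: factorize; ring.
Qed.

Lemma fwd11 (R : realType) (p q r u w s : R) : cubP p q r u w s != 0 ->
  (q*w - r*w - r*s = 0 /\ p*w + r*u - r*s = 0 /\ p*w + p*s + q*u - q*w - q*s + r*w + r*s = 0) ->
  mpoly_reducible (cubP p q r u w s).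
Proof.
move=> nz [ha [hb hc]].
case: (eqVneq w 0) => [hw|hD].
  have hrs : r*s = 0 by apply: (lc2 (a:=-1) (b:=q-r) ha hw); ring.
  case: (mul0 hrs) => [hr|hs]; first exact: fwd3.
  have hru : r*u = 0 by apply: (lc3 (a:=1) (b:=1) (c:=-p) hb hrs hw); ring.
  case: (mul0 hru) => [hr|hu]; [exact: fwd3 | exact: fwd4].
pose h := r/w.
have hp : p = (s-u)*h.
  apply: (solveD hD (N := r*(s-u))); first by apply: eqsub; apply: (lc1 (a:=1) hb); ring.
  by rewrite /h; field; exact hD.
have hq : q = (w+s)*h.
  apply: (solveD hD (N := r*(w+s))); first by apply: eqsub; apply: (lc1 (a:=1) ha); ring.
  by rewrite /h; field; exact hD.
have hr : r = w*h by rewrite /h; field; exact hD.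
clearbody h; subst p q r; rewrite /cubP in nz *.
apply: (red_of_fact (l1:=(w+s-u)) (l2:=(w+s)) (l3:=w) (q1:=0) (q2:=0) (q3:=0) (q4:=(u*h)) (q5:=(- u*h + s*h)) (q6:=(s*h)) nz).
  by apply: factorize; ring.
Qed.

Lemma fwd12 (R : realType) (p q r u w s : R) : cubP p q r u w s != 0 ->
  (- (p*s) + q*w + q*s - r*w - r*s = 0 /\ q*u - r*u + r*s = 0 /\ p*u - p*s + q*w + q*s = 0) ->
  mpoly_reducible (cubP p q r u w s).
Proof.
move=> nz [ha [hb hc]].
case: (eqVneq u 0) => [hu|hD]; first exact: fwd4.
case: (eqVneq (u-s) 0) => [hus|hus].
  by apply: fwd5 => //; apply: (lc1 (a:=-1) hus); ring.
pose h := r/u.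
have hq : q = (u-s)*h.
  apply: (solveD hD (N := r*(u-s))); first by apply: eqsub; apply: (lc1 (a:=1) hb); ring.
  by rewrite /h; field; exact hD.
have hp : p = -(w+s)*h.
  apply: (solveD hD (N := -(r*(w+s)))).
    apply: eqsub; apply: (nz_mul hus).
    by apply: (lc2 (a:=u) (b:=-(w+s)) hc hb); ring.
  by rewrite /h; field; exact hD.
have hr : r = u*h by rewrite /h; field; exact hD.
clearbody h; subst p q r; rewrite /cubP in nz *.
apply: (red_of_fact (l1:=(w+s-u)) (l2:=(s-u)) (l3:=w) (q1:=0) (q2:=0) (q3:=0) (q4:=(- u*h)) (q5:=(- w*h - s*h)) (q6:=(- s*h)) nz).
  by apply: factorize; ring.
Qed.

Lemma fwd (R : realType) (p q r u w s : R) : cubP p q r u w s != 0 ->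
  condsP p q r u w s -> mpoly_reducible (cubP p q r u w s).
Proof.
move=> nz.
case=> [H|[H|[H|[H|[H|[H|[H|[H|[H|[H|[H|H]]]]]]]]]]].
- exact: fwd1 H.
- exact: fwd2 H.
- exact: fwd3 H.
- exact: fwd4 H.
- exact: fwd5 H.
- exact: fwd6 H.
- exact: fwd7 H.
- exact: fwd8 H.
- exact: fwd9 H.
- exact: fwd10 H.
- exact: fwd11 H.
- exact: fwd12 H.
Qed.

Lemma spohn_cub (R : realType) (a11 a12 a21 a22 b11 b12 b21 b22 : R) :
  spohn_cubic a11 a12 a21 a22 b11 b12 b21 b22 = cub (spohn_c1 a11 a12 a21 a22 b11 b12 b21 b22)
  (spohn_c2 a11 a12 a21 a22 b11 b12 b21 b22) (spohn_c3 a11 a12 a21 a22 b11 b12 b21 b22)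
  (spohn_c4 a11 a12 a21 a22 b11 b12 b21 b22) (spohn_c5 a11 a12 a21 a22 b11 b12 b21 b22)
  (spohn_c6 a11 a12 a21 a22 b11 b12 b21 b22) (spohn_c7 a11 a12 a21 a22 b11 b12 b21 b22).
Proof. rewrite /spohn_cubic /cub /MC /XX /=. reflexivity. Qed.

Lemma spohn_cubP (R : realType) (a11 a12 a21 a22 b11 b12 b21 b22 : R) :
  spohn_cubic a11 a12 a21 a22 b11 b12 b21 b22 =
  cubP (a11-a21) (a12-a22) (a21-a22) (b11-b12) (b22-b21) (b21-b12).
Proof.
rewrite spohn_cub /cubP.
have e1 : spohn_c1 a11 a12 a21 a22 b11 b12 b21 b22 = ((a11-a21)+(a21-a22))*(b11-b12) by rewrite /spohn_c1; ring.
have e2 : spohn_c2 a11 a12 a21 a22 b11 b12 b21 b22 = (a11-a21)*((b22-b21)+(b21-b12)-(b11-b12)) by rewrite /spohn_c2; ring.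
have e3 : spohn_c3 a11 a12 a21 a22 b11 b12 b21 b22 = (a12-a22)*(b11-b12) by rewrite /spohn_c3; ring.
have e4 : spohn_c4 a11 a12 a21 a22 b11 b12 b21 b22 = (a11-a21)*(b22-b21) by rewrite /spohn_c4; ring.
have e5 : spohn_c5 a11 a12 a21 a22 b11 b12 b21 b22 = (a12-a22)*(b21-b12) by rewrite /spohn_c5; ring.
have e6 : spohn_c6 a11 a12 a21 a22 b11 b12 b21 b22 = ((a12-a22)-(a21-a22))*(b22-b21) by rewrite /spohn_c6; ring.
have e7 : spohn_c7 a11 a12 a21 a22 b11 b12 b21 b22 = ((a12-a22)-(a21-a22))*((b22-b21)+(b21-b12)-(b11-b12)) + ((a11-a21)+(a21-a22))*(b21-b12) by rewrite /spohn_c7; ring.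
by rewrite e1 e2 e3 e4 e5 e6 e7.
Qed.

Lemma ceq0 (R : realType) (x : R) : (x%:C)%C = 0 -> x = 0.
Proof. by move=> h; apply: (@complexI R); rewrite h rmorph0. Qed.

Ltac tr := let H := fresh in move=> H; apply: ceq0;
  rewrite ?(rmorphD, rmorphB, rmorphN, rmorphM); exact H.

Lemma condsP_C (R : realType) (p q r u w s : R) :
  condsP (p%:C)%C (q%:C)%C (r%:C)%C (u%:C)%C (w%:C)%C (s%:C)%C -> condsP p q r u w s.
Proof.
case=> [H|[H|[H|[H|[H|[H|[H|[H|[H|[H|[H|H]]]]]]]]]]].
- by left; move: H; tr.
- by right; left; move: H; tr.
- by do 2 right; left; move: H; tr.
- by do 3 right; left; move: H; tr.
- by do 4 right; left; move: H; tr.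
- by do 5 right; left; move: H; tr.
- by do 6 right; left; case: H => h1 h2; split; [move: h1|move: h2]; tr.
- by do 7 right; left; case: H => h1 h2; split; [move: h1|move: h2]; tr.
- by do 8 right; left; case: H => [h1 [h2 h3]]; split; [|split]; [move: h1|move: h2|move: h3]; tr.
- by do 9 right; left; case: H => [h1 [h2 h3]]; split; [|split]; [move: h1|move: h2|move: h3]; tr.
- by do 10 right; left; case: H => [h1 [h2 h3]]; split; [|split]; [move: h1|move: h2|move: h3]; tr.
- by do 11 right; case: H => [h1 [h2 h3]]; split; [|split]; [move: h1|move: h2|move: h3]; tr.
Qed.

Lemma Fc_FF (R : realType) (a11 a12 a21 a22 b11 b12 b21 b22 : R) (x y z : R[i]) :
  Fc (spohn_c1 a11 a12 a21 a22 b11 b12 b21 b22)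
  (spohn_c2 a11 a12 a21 a22 b11 b12 b21 b22) (spohn_c3 a11 a12 a21 a22 b11 b12 b21 b22)
  (spohn_c4 a11 a12 a21 a22 b11 b12 b21 b22) (spohn_c5 a11 a12 a21 a22 b11 b12 b21 b22)
  (spohn_c6 a11 a12 a21 a22 b11 b12 b21 b22) (spohn_c7 a11 a12 a21 a22 b11 b12 b21 b22) x y z
  = FF ((a11-a21)%:C)%C ((a12-a22)%:C)%C ((a21-a22)%:C)%C ((b11-b12)%:C)%C
       ((b22-b21)%:C)%C ((b21-b12)%:C)%C x y z.
Proof.
rewrite /Fc /FF /spohn_c1 /spohn_c2 /spohn_c3 /spohn_c4 /spohn_c5 /spohn_c6 /spohn_c7.
rewrite !(rmorphD, rmorphB, rmorphM); ring.
Qed.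

Definition orig (R : realType) (a11 a12 a21 a22 b11 b12 b21 b22 : R) : Prop :=
   ( a11 = a12 \/
    a11 = a21 \/
    a21 = a22 \/
    b11 = b12 \/
    b11 = b21 \/
    b12 = b22 \/
    (a12 = a22 /\ b21 = b22) \/
    (a12 = a21 /\ b12 = b21) \/
    (a12 * (b12 - b22) + a21 * (b22 - b21) + a22 * (b21 - b12) = 0 /\
     a11 * (b22 - b12) + a21 * (b11 - b22) + a22 * (b12 - b11) = 0 /\
     a11 * (b22 - b21) + a12 * (b11 - b22) + a22 * (b21 - b11) = 0) \/
    (a11 * (b12 - b21) + a12 * (b21 - b22) + a21 * (b22 - b12) = 0 /\
     a12 * (b11 - b21) + a21 * (b12 - b11) + a22 * (b21 - b12) = 0 /\
     a11 * (b11 - b21) + a21 * (b22 - b11) + a22 * (b21 - b22) = 0) \/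
    (a12 * (b22 - b21) + a21 * (b12 - b22) + a22 * (b21 - b12) = 0 /\
     a11 * (b22 - b21) + a21 * (b11 - b22) + a22 * (b21 - b11) = 0 /\
     a11 * (b22 - b12) + a12 * (b11 - b22) + a22 * (b12 - b11) = 0) \/
    (a11 * (b12 - b21) + a12 * (b22 - b12) + a21 * (b21 - b22) = 0 /\
     a12 * (b11 - b12) + a21 * (b21 - b11) + a22 * (b12 - b21) = 0 /\
     a11 * (b11 - b21) + a12 * (b22 - b12) + a21 * (b21 - b11)
       + a22 * (b12 - b22) = 0)).

Lemma eqsub' (K : zmodType) (a b : K) : a = b -> a - b = 0.
Proof. by move=> ->; rewrite subrr. Qed.

Ltac l1r := let H := fresh in move=> H; apply: (lc1 (a:=1) H); ring.
Ltac l1e := let H := fresh in move=> /eqsub' H; apply: (lc1 (a:=1) H); ring.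
Ltac l1eN := let H := fresh in move=> /eqsub' H; apply: (lc1 (a:=-1) H); ring.
Ltac l1EN := let H := fresh in move=> H; apply: eqsub; apply: (lc1 (a:=-1) H); ring.
Ltac l1E := let H := fresh in move=> H; apply: eqsub; apply: (lc1 (a:=1) H); ring.

Lemma orig_conds (R : realType) (a11 a12 a21 a22 b11 b12 b21 b22 : R) :
  orig a11 a12 a21 a22 b11 b12 b21 b22 <->
  condsP (a11-a21) (a12-a22) (a21-a22) (b11-b12) (b22-b21) (b21-b12).
Proof.
split.
  case=> [H|[H|[H|[H|[H|[H|[H|[H|[H|[H|[H|H]]]]]]]]]]].
  - by left; move: H; l1e.
  - by right; left; move: H; l1e.
  - by do 2 right; left; move: H; l1e.
  - by do 3 right; left; move: H; l1e.
  - by do 4 right; left; apply: (lc1 (a:=-1) (eqsub' H)); ring.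
  - by do 5 right; left; apply: (lc1 (a:=-1) (eqsub' H)); ring.
  - by do 6 right; left; case: H => h1 h2; split; [move: h1; l1e|move: h2; l1eN].
  - by do 7 right; left; case: H => h1 h2; split; [move: h1; l1e|move: h2; l1eN].
  - by do 8 right; left; case: H => [h1 [h2 h3]]; split; [|split]; [move: h1|move: h2|move: h3]; l1r.
  - by do 9 right; left; case: H => [h1 [h2 h3]]; split; [|split]; [move: h1|move: h2|move: h3]; l1r.
  - by do 10 right; left; case: H => [h1 [h2 h3]]; split; [|split]; [move: h1|move: h2|move: h3]; l1r.
  - by do 11 right; case: H => [h1 [h2 h3]]; split; [|split]; [move: h1|move: h2|move: h3]; l1r.
case=> [H|[H|[H|[H|[H|[H|[H|[H|[H|[H|[H|H]]]]]]]]]]].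
- by left; move: H; l1E.
- by right; left; move: H; l1E.
- by do 2 right; left; move: H; l1E.
- by do 3 right; left; move: H; l1E.
- by do 4 right; left; apply: eqsub; apply: (lc1 (a:=-1) H); ring.
- by do 5 right; left; apply: eqsub; apply: (lc1 (a:=-1) H); ring.
- by do 6 right; left; case: H => h1 h2; split; [move: h1; l1E|move: h2; l1EN].
- by do 7 right; left; case: H => h1 h2; split; [move: h1; l1E|move: h2; l1EN].
- by do 8 right; left; case: H => [h1 [h2 h3]]; split; [|split]; [move: h1|move: h2|move: h3]; l1r.
- by do 9 right; left; case: H => [h1 [h2 h3]]; split; [|split]; [move: h1|move: h2|move: h3]; l1r.
- by do 10 right; left; case: H => [h1 [h2 h3]]; split; [|split]; [move: h1|move: h2|move: h3]; l1r.
- by do 11 right; case: H => [h1 [h2 h3]]; split; [|split]; [move: h1|move: h2|move: h3]; l1r.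
Qed.

Unset Implicit Arguments.

Theorem theorem3p2 (R : realType) (a11 a12 a21 a22 b11 b12 b21 b22 : R) :
  mpoly_reducible (spohn_cubic a11 a12 a21 a22 b11 b12 b21 b22)
  <->
  (spohn_cubic a11 a12 a21 a22 b11 b12 b21 b22 != 0 /\
   ((* (1) *) a11 = a12 \/
    (* (2) *) a11 = a21 \/
    (* (3) *) a21 = a22 \/
    (* (4) *) b11 = b12 \/
    (* (5) *) b11 = b21 \/
    (* (6) *) b12 = b22 \/
    (* (7) *) (a12 = a22 /\ b21 = b22) \/
    (* (8) *) (a12 = a21 /\ b12 = b21) \/
    (* (9) *)
    (a12 * (b12 - b22) + a21 * (b22 - b21) + a22 * (b21 - b12) = 0 /\
     a11 * (b22 - b12) + a21 * (b11 - b22) + a22 * (b12 - b11) = 0 /\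
     a11 * (b22 - b21) + a12 * (b11 - b22) + a22 * (b21 - b11) = 0) \/
    (* (10) *)
    (a11 * (b12 - b21) + a12 * (b21 - b22) + a21 * (b22 - b12) = 0 /\
     a12 * (b11 - b21) + a21 * (b12 - b11) + a22 * (b21 - b12) = 0 /\
     a11 * (b11 - b21) + a21 * (b22 - b11) + a22 * (b21 - b22) = 0) \/
    (* (11) *)
    (a12 * (b22 - b21) + a21 * (b12 - b22) + a22 * (b21 - b12) = 0 /\
     a11 * (b22 - b21) + a21 * (b11 - b22) + a22 * (b21 - b11) = 0 /\
     a11 * (b22 - b12) + a12 * (b11 - b22) + a22 * (b12 - b11) = 0) \/
    (* (12) *)
    (a11 * (b12 - b21) + a12 * (b22 - b12) + a21 * (b21 - b22) = 0 /\
     a12 * (b11 - b12) + a21 * (b21 - b11) + a22 * (b12 - b21) = 0 /\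
     a11 * (b11 - b21) + a12 * (b22 - b12) + a21 * (b21 - b11)
       + a22 * (b12 - b22) = 0))).
Proof.
split.
  move=> Hred; split; first by case: Hred.
  change (orig a11 a12 a21 a22 b11 b12 b21 b22).
  apply/orig_conds.
  move: Hred; rewrite spohn_cub => /rev_main [al [be [ga [hnz Hv]]]].
  apply: condsP_C.
  apply: (core (al:=al) (be:=be) (ga:=ga)) => //.
    by rewrite pnatr_eq0.
  by move=> x y z hL; rewrite -Fc_FF; exact: Hv.
case=> nz H.
rewrite spohn_cubP in nz *.
apply: fwd nz _.
by apply/orig_conds; exact: H.
Qed.
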